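(* Let $N=\{n_1,\dots,n_m\}$ be a finite validator set ($m\ge 1$) in which validator $n_i$ has staked tokens $s_i>0$. Let $\rho_{\mathbb{N}_L}$ and $\rho_{\mathbb{N}_S}$ be the Nakamoto coefficients for liveness and safety of $N$ under the linear stake-weight model ($w_i=s_i$), and let $\rho^*_{\mathbb{N}_L}$ and $\rho^*_{\mathbb{N}_S}$ be those under the Square Root Stake Weight (SRSW) model ($w^*_i=\sqrt{s_i}$). Then $\rho^*_{\mathbb{N}_L}\ge \rho_{\mathbb{N}_L}$ and $\rho^*_{\mathbb{N}_S}\ge \rho_{\mathbb{N}_S}$.
   Context: Weighted consensus: each validator $n_i$ has a weight $w_i>0$ and $W=\sum_{i=1}^m w_i$. A quorum is $\mathbb{Q}=\tfrac{2}{3}W$. Nakamoto coefficient for liveness: $\mathbb{N}_L=\min\{|L| : L\subseteq N,\ \sum_{i\in L} w_i\ge \tfrac13 W\}$ and $\rho_{\mathbb{N}_L}=100\,\mathbb{N}_L/m$. Nakamoto coefficient for safety: $\mathbb{N}_S=\min\{|S| : S\subseteq N,\ \sum_{i\in S} w_i\ge \mathbb{Q}\}$ and $\rho_{\mathbb{N}_S}=\mathbb{N}_S/m$. In the linear model $w_i=s_i$; in the SRSW model $w_i=\sqrt{s_i}$; the coefficients for a model are computed with that model's weights. *)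

(* Defs.v *)
From mathcomp Require Import all_boot all_order all_algebra.
Set Implicit Arguments. Unset Strict Implicit. Unset Printing Implicit Defensive.
Import Order.TTheory GRing.Theory Num.Theory.
Local Open Scope ring_scope.

Definition total_weight (R : realFieldType) (m : nat) (w : 'I_m -> R) : R :=
  \sum_(i < m) w i.

(* Minimum cardinality of a set of validators whose total weight is >= t.
   (The arg min is taken over all subsets; setT is the reference point,
   which satisfies the condition whenever t <= W.) *)
Definition min_card_reaching (R : realFieldType) (m : nat) (w : 'I_m -> R)
  (t : R) : nat :=
  #|[arg min_(S < [set: 'I_m] | t <= \sum_(i in S) w i) #|S| ]|.

Definition NL (R : realFieldType) (m : nat) (w : 'I_m -> R) : nat :=
  min_card_reaching w (total_weight w / 3%:R).

Definition NS (R : realFieldType) (m : nat) (w : 'I_m -> R) : nat :=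
  min_card_reaching w (2%:R * total_weight w / 3%:R).

Definition rho_NL (R : realFieldType) (m : nat) (w : 'I_m -> R) : R :=
  100%:R * (NL w)%:R / m%:R.

Definition rho_NS (R : realFieldType) (m : nat) (w : 'I_m -> R) : R :=
  (NS w)%:R / m%:R.

Definition linear_w (R : rcfType) (m : nat) (s : 'I_m -> R) : 'I_m -> R := s.
Definition srsw_w (R : rcfType) (m : nat) (s : 'I_m -> R) : 'I_m -> R :=
  fun i => Num.sqrt (s i).

(* Main.v *)
Require Import Defs.
From mathcomp Require Import all_boot all_order all_algebra.
From mathcomp Require Import ring lra.
Import Order.TTheory GRing.Theory Num.Theory.
Local Open Scope ring_scope.

Set Implicit Arguments.
Section Aux.
Variable R : rcfType.
Variable m : nat.

Lemma mcr_le (w : 'I_m -> R) t (S : {set 'I_m}) :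
  t <= \sum_(i in [set: 'I_m]) w i ->
  t <= \sum_(i in S) w i -> (min_card_reaching w t <= #|S|)%N.
Proof.
move=> HT H; rewrite /min_card_reaching.
case: (@arg_minnP _ [set: 'I_m] (fun S => t <= \sum_(i in S) w i) (fun S => #|S|) HT).
by move=> S0 _ /(_ S H).
Qed.

Lemma mcr_ex (w : 'I_m -> R) t :
  t <= \sum_(i in [set: 'I_m]) w i ->
  exists S : {set 'I_m}, t <= \sum_(i in S) w i /\ #|S| = min_card_reaching w t.
Proof.
move=> H; rewrite /min_card_reaching.
case: (@arg_minnP _ [set: 'I_m] (fun S => t <= \sum_(i in S) w i) (fun S => #|S|) H).
by move=> S0 HS0 _; exists S0.
Qed.

Lemma sum_cmp (g : 'I_m -> R) (A B : {set 'I_m}) :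
  #|A| = #|B| -> (forall a b, a \in A -> b \in B -> g b <= g a) ->
  \sum_(i in B) g i <= \sum_(i in A) g i.
Proof.
move=> hc hab.
case: (posnP #|A|) => hn.
  have hB : #|B| = 0%N by rewrite -hc.
  rewrite !big_pred0 // => i; apply/negbTE; [move: hn | move: hB] => /eqP;
  rewrite cards_eq0 => /eqP ->; by rewrite inE.
rewrite -(ler_pMn2r hn).
have -> : (\sum_(i in A) g i) *+ #|A| = (\sum_(i in A) g i) *+ #|B| by rewrite hc.
rewrite -!sumr_const.
rewrite [leRHS]exchange_big /=.
apply: ler_sum => a ha; apply: ler_sum => b hb; exact: hab.
Qed.


Lemma sumT (w : 'I_m -> R) : \sum_(i < m) w i = \sum_(i in [set: 'I_m]) w i.
Proof. by apply: eq_bigl => i; rewrite inE. Qed.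

Lemma sumTsplit (w : 'I_m -> R) (T : {set 'I_m}) :
  \sum_(i < m) w i = \sum_(i in T) w i + \sum_(i in ~: T) w i.
Proof. by rewrite sumT (big_setID (A:=[set: _]) T) setTI setTD. Qed.

Lemma top_exists (s : 'I_m -> R) (S : {set 'I_m}) :
  exists T : {set 'I_m}, #|T| = #|S| /\
    forall i j, i \in T -> j \notin T -> s j <= s i.
Proof.
case: (@arg_maxP _ R _ S (fun T => #|T| == #|S|) (fun T => \sum_(i in T) s i) (eqxx _))
  => T /eqP hT hmax.
exists T; split => // i j hi hj.
rewrite leNgt; apply/negP => hlt.
have hc : #|j |: (T :\ i)| == #|S|.
  rewrite cardsU1 in_setD1 (negbTE hj) andbF -hT (cardsD1 i T) hi.
  by rewrite add1n.
have := hmax _ hc.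
rewrite big_setU1 ?in_setD1 ?(negbTE hj) ?andbF // (big_setD1 i hi) /= lerD2r.
by rewrite leNgt hlt.
Qed.


Lemma share (s : 'I_m -> R) (hs : forall i, 0 < s i) (T : {set 'I_m}) :
  (forall i j, i \in T -> j \notin T -> s j <= s i) ->
  (\sum_(i in T) Num.sqrt (s i)) * (\sum_(j in ~: T) s j) <=
  (\sum_(i in T) s i) * (\sum_(j in ~: T) Num.sqrt (s j)).
Proof.
move=> htop; rewrite !big_distrlr /=.
apply: ler_sum => i hi; apply: ler_sum => j hj.
have hij : Num.sqrt (s j) <= Num.sqrt (s i).
  by rewrite ler_sqrt ?(ltW (hs i)) // htop // -in_setC.
have h0 : 0 <= Num.sqrt (s j) by apply: sqrtr_ge0.
rewrite -{2}(sqr_sqrtr (ltW (hs i))) -{1}(sqr_sqrtr (ltW (hs j))).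
have hu : 0 <= Num.sqrt (s i) by apply: sqrtr_ge0.
have hd : 0 <= Num.sqrt (s i) - Num.sqrt (s j) by rewrite subr_ge0.
have := mulr_ge0 (mulr_ge0 hu h0) hd.
move: (Num.sqrt (s i)) (Num.sqrt (s j)) => u v H; rewrite -subr_ge0.
by have -> : u ^+ 2 * v - u * v ^+ 2 = u * v * (u - v) by ring.
Qed.

Lemma main (s : 'I_m -> R) (hs : forall i, 0 < s i) (f : R) :
  0 <= f -> f <= 1 ->
  (min_card_reaching s (f * \sum_(i < m) s i) <=
   min_card_reaching (fun i => Num.sqrt (s i)) (f * \sum_(i < m) Num.sqrt (s i)))%N.
Proof.
move=> f0 f1.
set x := fun i => Num.sqrt (s i).
have hx0 : forall i, 0 <= x i by move=> i; apply: sqrtr_ge0.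
have hs0 : forall i, 0 <= s i by move=> i; apply: ltW.
have Hx : f * \sum_(i < m) x i <= \sum_(i in [set: 'I_m]) x i.
  by rewrite -sumT ler_piMl // sumr_ge0.
have Hs : f * \sum_(i < m) s i <= \sum_(i in [set: 'I_m]) s i.
  by rewrite -sumT ler_piMl // sumr_ge0.
have [S [HS <-]] := @mcr_ex x _ Hx.
have [T [hT htop]] := top_exists s S.
have hTS : \sum_(i in S) x i <= \sum_(i in T) x i.
  rewrite (big_setID (A:=S) T) (big_setID (A:=T) S) setIC lerD2l.
  apply: sum_cmp.
    apply/eqP; rewrite -(eqn_add2l #|T :&: S|) cardsID {1}setIC cardsID hT //.
  move=> a b; rewrite !inE => /andP [ha1 ha2] /andP [hb1 hb2].
  by rewrite ler_sqrt // htop.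
apply: (leq_trans (@mcr_le s _ T Hs _)); last by rewrite hT.
have hsh := @share s hs T htop.
move: HS; rewrite (sumTsplit x T) (sumTsplit s T) -/x => HS.
have HS' := le_trans HS hTS.
move: hsh; rewrite -/x => hsh.
set a := \sum_(i in T) x i in HS' hsh *.
set b := \sum_(i in ~: T) x i in HS' hsh *.
set A := \sum_(i in T) s i in hsh *.
set B := \sum_(i in ~: T) s i in hsh *.
have hA : 0 <= A by apply: sumr_ge0.
have hB : 0 <= B by apply: sumr_ge0.
have ha : 0 <= a by apply: sumr_ge0.
case: (eqVneq (~: T) set0) => hC.
  have hB0 : B = 0 by rewrite /B hC big_set0.
  rewrite hB0 addr0; rewrite -[X in _ <= X]mul1r; apply: ler_wpM2r => //.
have [j hj] := set0Pn _ hC.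
have hb : 0 < b.
  rewrite /b (big_setD1 j hj) /=.
  apply: (@lt_le_trans _ _ (x j)); first by rewrite sqrtr_gt0.
  by rewrite lerDl sumr_ge0.
have : 0 <= b * (A - f * (A + B)) by nra.
by rewrite pmulr_rge0 // subr_ge0.
Qed.

End Aux.

Theorem lemma1 (R : rcfType) (m : nat) (hm : (1 <= m)%N) (s : 'I_m -> R)
  (hs : forall i, 0 < s i) :
  rho_NL (linear_w s) <= rho_NL (srsw_w s) /\
  rho_NS (linear_w s) <= rho_NS (srsw_w s).
Proof.
have hm0 : 0 <= (m%:R : R)^-1 by rewrite invr_ge0 ler0n.
have h3 : (0 : R) <= 3%:R^-1 by rewrite invr_ge0 ler0n.
have h31 : (3%:R : R)^-1 <= 1 by rewrite invf_le1 ?ler1n ?ltr0n.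
have h23 : (0 : R) <= 2%:R / 3%:R by rewrite mulr_ge0 ?ler0n.
have h231 : (2%:R : R) / 3%:R <= 1 by rewrite ler_pdivrMr ?ltr0n // mul1r ler_nat.
split.
- rewrite /rho_NL ler_wpM2r // ler_wpM2l ?ler0n // ler_nat /NL /total_weight.
  rewrite /linear_w /srsw_w ![_ / 3%:R]mulrC.
  exact: main.
- rewrite /rho_NS ler_wpM2r // ler_nat /NS /total_weight.
  rewrite /linear_w /srsw_w ![2%:R * _ / 3%:R]mulrAC.
  exact: main.
Qed.
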